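(* For $x=(a,b,c,d)\in\mathbb{Z}^4$, let $P(x)=b^2c^2+18abcd-4ac^3-4b^3d-27a^2d^2$. Writing $\mathcal{E}=2\mathbb{Z}$ and $\mathcal{O}=2\mathbb{Z}+1$, we have $P(x)\equiv 4\pmod{16}$ if and only if one of the following holds: (1) $a,b,c,d\in\mathcal{O}$ and $a+b+c+d\in2\mathcal{O}$; (2) $b,c\in\mathcal{E}$ and $ad\in2\mathcal{O}$; (3) $a\in2\mathcal{E}$, $b\in2\mathcal{O}$, $c\in\mathcal{O}$; (4) $d\in2\mathcal{E}$, $c\in2\mathcal{O}$, $b\in\mathcal{O}$; (5) $b+c\in\mathcal{O}$ and $a+c,\ b+d\in2\mathcal{E}$.
   Context: Here $2\mathcal{O}=\{2n: n\text{ odd}\}$ and $2\mathcal{E}=4\mathbb{Z}$. *)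

(* Defs.v *)
From Stdlib Require Import ZArith.
Open Scope Z_scope.

Definition inE (n : Z) : Prop := Z.Even n.
Definition inO (n : Z) : Prop := Z.Odd n.
Definition in2O (n : Z) : Prop := exists m : Z, Z.Odd m /\ n = 2 * m.
Definition in2E (n : Z) : Prop := exists m : Z, Z.Even m /\ n = 2 * m.

Definition P (a b c d : Z) : Z :=
  b^2 * c^2 + 18 * a * b * c * d - 4 * a * c^3 - 4 * b^3 * d - 27 * a^2 * d^2.

(* Main.v *)
Require Import Defs.
From Stdlib Require Import ZArith Lia Bool List.
Open Scope Z_scope.

Lemma inO_m n : inO n <-> n mod 2 = 1.
Proof. unfold inO, Z.Odd; split.
 - intros [m ->]. rewrite Z.add_mod, Z.mul_comm, Z.mod_mul by lia. reflexivity.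
 - intros H. exists (n/2). pose proof (Z.div_mod n 2). lia. Qed.
Lemma inE_m n : inE n <-> n mod 2 = 0.
Proof. unfold inE, Z.Even; split.
 - intros [m ->]. rewrite Z.mul_comm, Z.mod_mul by lia. reflexivity.
 - intros H. exists (n/2). pose proof (Z.div_mod n 2). lia. Qed.
Lemma in2O_m n : in2O n <-> n mod 4 = 2.
Proof. unfold in2O; split.
 - intros [m [Hm ->]]. apply inO_m in Hm. pose proof (Z.div_mod m 2); pose proof (Z.mod_pos_bound (2*m) 4); pose proof (Z.div_mod (2*m) 4); lia.
 - intros H. exists (n/2). pose proof (Z.div_mod n 4); pose proof (Z.div_mod n 2); pose proof (Z.div_mod (n/2) 2); pose proof (Z.mod_pos_bound n 4); pose proof (Z.mod_pos_bound n 2); pose proof (Z.mod_pos_bound (n/2) 2). split; [apply inO_m|]; lia. Qed.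
Lemma in2E_m n : in2E n <-> n mod 4 = 0.
Proof. unfold in2E; split.
 - intros [m [Hm ->]]. apply inE_m in Hm. pose proof (Z.div_mod m 2); pose proof (Z.mod_pos_bound (2*m) 4); pose proof (Z.div_mod (2*m) 4); lia.
 - intros H. exists (n/2). pose proof (Z.div_mod n 4); pose proof (Z.div_mod n 2); pose proof (Z.div_mod (n/2) 2); pose proof (Z.mod_pos_bound n 4); pose proof (Z.mod_pos_bound n 2); pose proof (Z.mod_pos_bound (n/2) 2). split; [apply inE_m|]; lia. Qed.

Definition rhsb (a b c d : Z) : bool :=
  ((a mod 2 =? 1) && (b mod 2 =? 1) && (c mod 2 =? 1) && (d mod 2 =? 1) && ((a+b+c+d) mod 4 =? 2))
  || ((b mod 2 =? 0) && (c mod 2 =? 0) && ((a*d) mod 4 =? 2))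
  || ((a mod 4 =? 0) && (b mod 4 =? 2) && (c mod 2 =? 1))
  || ((d mod 4 =? 0) && (c mod 4 =? 2) && (b mod 2 =? 1))
  || (((b+c) mod 2 =? 1) && ((a+c) mod 4 =? 0) && ((b+d) mod 4 =? 0)).

Definition rng : list Z := map Z.of_nat (seq 0 16).

Definition chk4 (f : Z -> Z -> Z -> Z -> bool) : bool :=
  forallb (fun a => forallb (fun b => forallb (fun c => forallb (fun d =>
    f a b c d) rng) rng) rng) rng.

Definition fP (a b c d : Z) : bool := Bool.eqb (P a b c d mod 16 =? 4) (rhsb a b c d).

Lemma check_ok : chk4 fP = true. Proof. vm_compute. reflexivity. Qed.

Lemma in_rng x : 0 <= x < 16 -> In x rng.
Proof. intros H. assert (x=0\/x=1\/x=2\/x=3\/x=4\/x=5\/x=6\/x=7\/x=8\/x=9\/x=10\/x=11\/x=12\/x=13\/x=14\/x=15) by lia.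
  repeat (destruct H0 as [->|H0]; [simpl; tauto|]); subst; simpl; tauto. Qed.

Lemma chk4_ok f a b c d : chk4 f = true -> 0<=a<16 -> 0<=b<16 -> 0<=c<16 -> 0<=d<16 -> f a b c d = true.
Proof.
  intros H Ha Hb Hc Hd. unfold chk4 in H.
  rewrite forallb_forall in H. specialize (H a (in_rng a Ha)).
  rewrite forallb_forall in H. specialize (H b (in_rng b Hb)).
  rewrite forallb_forall in H. specialize (H c (in_rng c Hc)).
  rewrite forallb_forall in H. specialize (H d (in_rng d Hd)).
  exact H. Qed.

Lemma res_ok a b c d : 0<=a<16 -> 0<=b<16 -> 0<=c<16 -> 0<=d<16 ->
  (P a b c d mod 16 =? 4) = rhsb a b c d.
Proof.
  intros Ha Hb Hc Hd. apply Bool.eqb_prop. change (fP a b c d = true).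
  apply chk4_ok; assumption || exact check_ok. Qed.

Lemma cadd x y x' y' : x mod 16 = x' mod 16 -> y mod 16 = y' mod 16 -> (x+y) mod 16 = (x'+y') mod 16.
Proof. intros; rewrite Z.add_mod, H, H0, <- Z.add_mod; lia. Qed.
Lemma csub x y x' y' : x mod 16 = x' mod 16 -> y mod 16 = y' mod 16 -> (x-y) mod 16 = (x'-y') mod 16.
Proof. intros; rewrite Zminus_mod, H, H0, <- Zminus_mod; lia. Qed.
Lemma cmul x y x' y' : x mod 16 = x' mod 16 -> y mod 16 = y' mod 16 -> (x*y) mod 16 = (x'*y') mod 16.
Proof. intros; rewrite Z.mul_mod, H, H0, <- Z.mul_mod; lia. Qed.
Lemma cpow2 x x' : x mod 16 = x' mod 16 -> (x^2) mod 16 = (x'^2) mod 16.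
Proof. intros. replace (x^2) with (x*x) by ring. replace (x'^2) with (x'*x') by ring. apply cmul; auto. Qed.
Lemma cpow3 x x' : x mod 16 = x' mod 16 -> (x^3) mod 16 = (x'^3) mod 16.
Proof. intros. replace (x^3) with (x*x*x) by ring. replace (x'^3) with (x'*x'*x') by ring. repeat apply cmul; auto. Qed.

Lemma P_mod a b c d : P a b c d mod 16 = P (a mod 16) (b mod 16) (c mod 16) (d mod 16) mod 16.
Proof.
  unfold P. repeat first [ apply csub | apply cadd | apply cmul | apply cpow2 | apply cpow3
   | reflexivity | (rewrite Z.mod_mod; [reflexivity|lia]) ].
Qed.

Lemma m16_4 x y : x mod 16 = y mod 16 -> x mod 4 = y mod 4.
Proof. intros H. pose proof (Z.div_mod x 16); pose proof (Z.div_mod y 16).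
  replace x with (y + ((x/16 - y/16) * 4) * 4) by lia. rewrite Z.mod_add; lia. Qed.
Lemma m16_2 x y : x mod 16 = y mod 16 -> x mod 2 = y mod 2.
Proof. intros H. pose proof (Z.div_mod x 16); pose proof (Z.div_mod y 16).
  replace x with (y + ((x/16 - y/16) * 8) * 2) by lia. rewrite Z.mod_add; lia. Qed.
Lemma mm x : x mod 16 = (x mod 16) mod 16. Proof. rewrite Z.mod_mod; lia. Qed.

Lemma rhsb_mod a b c d : rhsb a b c d = rhsb (a mod 16) (b mod 16) (c mod 16) (d mod 16).
Proof.
  unfold rhsb.
  assert (E2 : forall x y, x mod 16 = y mod 16 -> x mod 2 = y mod 2) by exact m16_2.
  assert (E4 : forall x y, x mod 16 = y mod 16 -> x mod 4 = y mod 4) by exact m16_4.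
  rewrite (E2 a (a mod 16)), (E2 b (b mod 16)), (E2 c (c mod 16)), (E2 d (d mod 16)),
   (E4 a (a mod 16)), (E4 b (b mod 16)), (E4 c (c mod 16)), (E4 d (d mod 16)),
   (E4 (a+b+c+d) (a mod 16 + b mod 16 + c mod 16 + d mod 16)),
   (E4 (a*d) (a mod 16 * (d mod 16))),
   (E2 (b+c) (b mod 16 + c mod 16)),
   (E4 (a+c) (a mod 16 + c mod 16)),
   (E4 (b+d) (b mod 16 + d mod 16)); try reflexivity;
  repeat first [apply cadd | apply cmul | apply mm].
Qed.
Theorem lemma2p5 (a b c d : Z) :
  P a b c d mod 16 = 4 <->
  ((inO a /\ inO b /\ inO c /\ inO d /\ in2O (a + b + c + d))
   \/ (inE b /\ inE c /\ in2O (a * d))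
   \/ (in2E a /\ in2O b /\ inO c)
   \/ (in2E d /\ in2O c /\ inO b)
   \/ (inO (b + c) /\ in2E (a + c) /\ in2E (b + d))).
Proof.
  assert (H : (P a b c d mod 16 =? 4) = rhsb a b c d).
  { rewrite P_mod, rhsb_mod. apply res_ok; apply Z.mod_pos_bound; lia. }
  rewrite <- Z.eqb_eq, H. unfold rhsb.
  rewrite !orb_true_iff, !andb_true_iff, !Z.eqb_eq,
    !inO_m, !inE_m, !in2O_m, !in2E_m. tauto.
Qed.
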